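(* Let $X$ be a countably based $T_0$-space and $\rho\colon\subseteq\omega^\omega\to X$ an admissible representation of $X$. For all countable ordinals $\alpha,\theta>0$ and every $S\subseteq X$: $S\in D_\alpha(\mathbf{\Sigma}^0_\theta(X))$ if and only if $\rho^{-1}(S)\in D_\alpha(\mathbf{\Sigma}^0_\theta(\mathrm{dom}(\rho)))$, where $\mathrm{dom}(\rho)$ has the subspace topology from $\omega^\omega$.
   Context: $\omega^\omega$ has the product topology. A partial continuous $\rho\colon\subseteq\omega^\omega\to X$ is an admissible representation of $X$ if for every partial continuous $f\colon\subseteq\omega^\omega\to X$ there is a partial continuous $g\colon\subseteq\omega^\omega\to\omega^\omega$ with $f=\rho\circ g$. Borel hierarchy on a topological space $Z$: $\mathbf{\Sigma}^0_1(Z)$ = open sets; for $1<\alpha<\omega_1$, $\mathbf{\Sigma}^0_\alpha(Z)$ consists of sets $\bigcup_{i\in\omega}(B_i\setminus B_i')$ with $B_i,B_i'\in\mathbf{\Sigma}^0_{\beta_i}(Z)$, $\beta_i<\alpha$. Difference hierarchy: write an ordinal as $\alpha=\beta+n$ with $\beta$ a limit or $0$ and $n<\omega$; $r(\alpha)=0$ if $n$ is even, $1$ otherwise. For an increasing sequence $(A_\beta)_{\beta<\alpha}$ ($A_\gamma\subseteq A_\beta$ for $\gamma<\beta<\alpha$), $D_\alpha((A_\beta)_{\beta<\alpha})=\bigcup\{A_\beta\setminus\bigcup_{\gamma<\beta}A_\gamma\mid\beta<\alpha,\ r(\beta)\ne r(\alpha)\}$, and $D_\alpha(\mathbf{\Sigma}^0_\theta(Z))$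 is the class of all such sets with each $A_\beta\in\mathbf{\Sigma}^0_\theta(Z)$. *)

(* Defs.v *)
From HB Require Import structures.
From mathcomp Require Import all_boot all_order all_algebra.
From mathcomp Require Import all_classical all_reals all_analysis.
Set Implicit Arguments. Unset Strict Implicit. Unset Printing Implicit Defensive.
Local Open Scope classical_set_scope.

Definition baire : Type := {ptws nat -> nat}.
HB.instance Definition _ := Topological.on baire.

(** Their order types are exactly the countable
    ordinals; an ordinal is represented by (any) well-order of that type. *)
Record cwo := CWO {
  cwo_car :> countType;
  cwo_lt : cwo_car -> cwo_car -> Prop;
  cwo_wf : well_founded cwo_lt;
  cwo_trans : forall x y z, cwo_lt x y -> cwo_lt y z -> cwo_lt x z;
  cwo_total : forall x y, cwo_lt x y \/ x = y \/ cwo_lt y x }.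

Section Ordinals.
Variable A : cwo.
Local Notation lt := (@cwo_lt A).

Definition imm_pred (a b : A) := lt a b /\ forall c, lt a c -> lt c b -> False.

(** parity of the ordinal (order type of the initial segment) of b:
    b = lambda + n with lambda limit or 0; even iff n even. *)
Inductive ord_even : A -> Prop :=
  | ev_lim b : (forall a, ~ imm_pred a b) -> ord_even b
  | ev_succ a b : imm_pred a b -> ord_odd a -> ord_even b
with ord_odd : A -> Prop :=
  | od_succ a b : imm_pred a b -> ord_even a -> ord_odd b.

(** r(alpha) = 1 for alpha the order type of A: alpha = m + 1 (m the maximum
    of A) with m of even parity.  If A has no maximum, alpha is 0 or a limit,
    hence even. *)
Definition top_odd : Prop :=
  exists m : A, (forall c, c = m \/ lt c m) /\ ord_even m.

(** b has exactly one predecessor, i.e. the ordinal of b is 1 *)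
Definition one_pred (b : A) := exists a, lt a b /\ forall c, lt c b -> c = a.
Definition one_elem := exists a : A, forall c : A, c = a.
End Ordinals.

(** For a countable well-order Th of type theta and
    b : Th whose initial segment has type beta, [SigmaE b] is
    Sigma^0_beta(Z) (for beta >= 1; it is empty for beta = 0, so that only
    levels beta >= 1 are used). [Sigma Th] is Sigma^0_theta(Z). *)
Section Borel.
Variable Z : topologicalType.
Variable Th : cwo.

Inductive SigmaE : Th -> set Z -> Prop :=
  | SE_open b (U : set Z) : one_pred b -> open U -> SigmaE b U
  | SE_union b (B B' : nat -> set Z) (v : nat -> Th) :
      ~ one_pred b -> (forall i, cwo_lt (v i) b) ->
      (forall i, SigmaE (v i) (B i)) -> (forall i, SigmaE (v i) (B' i)) ->
      SigmaE b (\bigcup_i (B i `\` B' i)).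

Definition Sigma (U : set Z) : Prop :=
  (one_elem Th /\ open U) \/
  (~ one_elem Th /\
   exists (B B' : nat -> set Z) (v : nat -> Th),
     (forall i, SigmaE (v i) (B i)) /\ (forall i, SigmaE (v i) (B' i)) /\
     U = \bigcup_i (B i `\` B' i)).
End Borel.

Definition Diff (Z : Type) (A : cwo) (C : set (set Z)) (S : set Z) : Prop :=
  exists F : A -> set Z,
    (forall b, C (F b)) /\
    (forall c b, cwo_lt c b -> F c `<=` F b) /\
    S = \bigcup_(b in [set b | ~ (ord_odd b <-> top_odd A)])
          (F b `\` \bigcup_(c in [set c | cwo_lt c b]) F c).

Definition admissible (X : topologicalType) (D : set baire) (rho : baire -> X) :=
  {within D, continuous rho} /\
  forall (Df : set baire) (f : baire -> X), {within Df, continuous f} ->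
    exists (Dg : set baire) (g : baire -> baire),
      {within Dg, continuous g} /\
      Df = [set p | Dg p /\ D (g p)] /\
      (forall p, Df p -> f p = rho (g p)).

(* Main.v *)
Require Import Defs.
From HB Require Import structures.
From mathcomp Require Import all_boot all_order all_algebra.
From mathcomp Require Import all_classical all_reals all_analysis.
Local Open Scope classical_set_scope.
Section Fwd.
Variables (Y Z : topologicalType) (f : Y -> Z) (cf : continuous f) (Th : cwo).

Lemma SigmaE_pre b U : @SigmaE Z Th b U -> @SigmaE Y Th b (f @^-1` U).
Proof.
elim=> {b U} [b U ob oU|b B B' v nb vb _ IH _ IH'].
  by apply: SE_open => //; exact: open_comp.
rewrite preimage_bigcup.
have -> : (fun i => f @^-1` (B i `\` B' i)) = (fun i => f @^-1` B i `\` f @^-1` B' i) by [].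
exact: SE_union.
Qed.

Lemma Sigma_pre U : Sigma Th U -> Sigma Th (f @^-1` U).
Proof.
case=> [ [H1 oU] | [H2 [B [B2 [v [HB [HB2 ->]]]]]] ].
  by left; split => //; exact: open_comp.
right; split => //; exists (fun i => f @^-1` B i), (fun i => f @^-1` B2 i), v.
split; [|split]; try by move=> i; exact: SigmaE_pre.
by apply/seteqP; split => x /=; firstorder.
Qed.

Lemma Diff_pre (A : cwo) S : Diff A (Sigma Th) S -> Diff A (Sigma Th) (f @^-1` S).
Proof.
case=> F [HF [Hmon ->]]; exists (fun b => f @^-1` F b); split.
  by move=> b; exact: Sigma_pre.
split; first by move=> c b cb x /=; apply: Hmon.
rewrite preimage_bigcup; apply: eq_bigcupr => b _.
by apply/seteqP; split => x /=; firstorder.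
Qed.
End Fwd.
Section Vaught.
Variables (P X : topologicalType) (d : P -> X).
Variables (Ix : countType) (N : Ix -> set P) (R : Ix -> Ix -> Prop).
Hypothesis HNo : forall n, open (N n).
Hypothesis HR : forall m n, R m n -> N m `<=` N n.
Hypothesis Hbase : forall (U : set P) p n, open U -> U p -> N n p ->
  exists m, R m n /\ N m p /\ N m `<=` U.
Variable n0 : Ix.
Hypothesis Htop : forall p, N n0 p.

Definition meets x n := exists p, d p = x /\ N n p.
Definition nwd x (E : set P) := forall n, meets x n ->
  exists m, R m n /\ meets x m /\ (forall p, d p = x -> N m p -> E p -> False).
Definition mgr x (E : set P) := exists Es : nat -> set P,
  (forall k, nwd x (Es k)) /\ (forall p, d p = x -> E p -> exists k, Es k p).

Lemma nwd0 x E : (forall p, d p = x -> E p -> False) -> nwd x E.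
Proof.
move=> H n [p [dp Np]].
have [m [Rmn [Nmp _]]] := Hbase setT p n (@openT P) Logic.I Np.
by exists m; split => //; split; [exists p|move=> q dq _ /(H q dq)].
Qed.

Lemma mgr0 x E : (forall p, d p = x -> E p -> False) -> mgr x E.
Proof.
move=> H; exists (fun _ => E); split; first by move=> k; exact: nwd0.
by move=> p dp /(H p dp).
Qed.

Lemma mgrS x E E' : (forall p, d p = x -> E' p -> E p) -> mgr x E -> mgr x E'.
Proof.
move=> H [Es [HE Hc]]; exists Es; split => // p dp /(H p dp); exact: Hc.
Qed.

Lemma mgrU (J : countType) x (E : J -> set P) :
  (forall j, mgr x (E j)) -> mgr x (\bigcup_j E j).
Proof.
move=> H.
have /choice [Es HEs] : forall j, exists Es : nat -> set P,
  (forall k, nwd x (Es k)) /\ (forall p, d p = x -> E j p -> exists k, Es k p).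
  exact: H.
exists (fun k => match (unpickle k : option (J * nat)) with
  | Some jk => Es jk.1 jk.2 | None => set0 end); split.
  move=> k; case: (unpickle k) => [[j l]|] /=; first by case: (HEs j).
  by apply: nwd0.
move=> p dp [j _ Ejp]; have [_ /(_ p dp Ejp) [k Hk]] := HEs j.
by exists (pickle (j, k)); rewrite pickleK.
Qed.

Lemma mgrU2 x E E' : mgr x E -> mgr x E' -> mgr x (E `|` E').
Proof.
move=> H1 H2.
have := @mgrU bool x (fun b => if b then E else E') (fun b => if b is true then H1 else H2).
apply: mgrS => p _ [H|H]; [by exists true|by exists false].
Qed.

Hypothesis Hbaire : forall x n, meets x n -> ~ mgr x (N n).

Lemma nmgr_ex x E : ~ mgr x E -> exists p, d p = x /\ E p.
Proof.
move=> H; apply: contrapT => H'; apply: H; apply: mgr0 => p dp Ep.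
by apply: H'; exists p.
Qed.

Lemma conv x m k : meets x m -> N m `<=` N k ->
  exists m', R m' k /\ meets x m' /\ N m' `<=` N m.
Proof.
move=> [p [dp Nmp]] sub.
have [m' [R' [Np' sub']]] := Hbase (N m) p k (HNo m) Nmp (sub _ Nmp).
by exists m'; split => //; split => //; exists p.
Qed.

Lemma nwd_mgr x E : nwd x E -> mgr x E.
Proof. by move=> H; exists (fun _ => E); split => // p _ Ep; exists 0. Qed.

Definition lbp x E := forall n, meets x n -> exists m, N m `<=` N n /\ meets x m /\
  (mgr x (N m `&` E) \/ mgr x (N m `\` E)).

Lemma L1 x E n : lbp x E -> ~ mgr x (N n `&` E) ->
  exists m, N m `<=` N n /\ meets x m /\ mgr x (N m `\` E).
Proof.
move=> HE Hn0; apply: contrapT => Hn; apply: Hn0.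
pose fam m := N m `<=` N n /\ (mgr x (N m `&` E) \/ mgr x (N m `\` E)).
have C1 : forall m, fam m -> mgr x (N m `&` E).
  move=> m [sub [//|H2]].
  case: (pselect (meets x m)) => [mm|nm].
    by exfalso; apply: Hn; exists m.
  by apply: mgr0 => p dp [Nmp _]; apply: nm; exists p.
pose Rest := N n `\` \bigcup_(m in fam) N m.
have RestN : nwd x Rest.
  move=> k mk.
  case: (pselect (exists p, d p = x /\ N k p /\ N n p)) => [[p [dp [Nkp Nnp]]]|no].
    have [m1 [R1 [N1p sub1]]] := Hbase (N n `&` N k) p k (openI (HNo n) (HNo k)) (conj Nnp Nkp) Nkp.
    have mm1 : meets x m1 by exists p.
    have [m2 [sub2 [mm2 disj2]]] := HE m1 mm1.
    have [m3 [R3 [mm3 sub3]]] := conv x m2 k mm2 (fun q Hq => (sub1 q (sub2 q Hq)).2).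
    exists m3; split => //; split => // q dq N3q [_ Hq]; apply: Hq.
    exists m2; last exact: sub3.
    by split => //; move=> r /sub2 /sub1 [].
  have [m [Rm [Nmp _]]] := Hbase setT (projT1 (cid mk)) k (@openT P) Logic.I
    (projT2 (cid mk)).2.
  exists m; split => //; split; first by exists (projT1 (cid mk)); split => //; exact: (projT2 (cid mk)).1.
  move=> q dq Nmq [Nnq _]; apply: no; exists q; split => //; split => //.
  exact: HR Rm _ Nmq.
pose H m := [set p | fam m /\ N m p /\ E p].
have HM : mgr x (\bigcup_m H m `|` Rest).
  apply: mgrU2; last exact: nwd_mgr.
  apply: mgrU => m; case: (pselect (fam m)) => [fm|nfm].
    by apply: mgrS (C1 m fm) => p _ [_ []].
  by apply: mgr0 => p _ [].
apply: mgrS HM => p dp [Nnp Ep].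
case: (pselect ((\bigcup_(m in fam) N m) p)) => [[m fm Nmp]|nU].
  by left; exists m => //.
by right; split.
Qed.

Lemma lbp_open x U : open U -> lbp x U.
Proof.
move=> oU n mn.
case: (pselect (exists p, d p = x /\ N n p /\ U p)) => [[p [dp [Nnp Up]]]|no].
  have [m [Rm [Nmp sub]]] := Hbase U p n oU Up Nnp.
  exists m; split; first exact: HR.
  split; first by exists p.
  by right; apply: mgr0 => q _ [/sub].
have [p [dp Nnp]] := mn.
have [m [Rm [Nmp _]]] := Hbase setT p n (@openT P) Logic.I Nnp.
exists m; split; first exact: HR.
split; first by exists p.
left; apply: mgr0 => q dq [Nmq Uq]; apply: no; exists q; split => //; split => //.
exact: HR Rm _ Nmq.
Qed.

Lemma lbp_C x E : lbp x E -> lbp x (~` E).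
Proof.
move=> H n mn; have [m [s [mm D]]] := H n mn.
exists m; split => //; split => //; case: D => D; [right|left].
  by apply: mgrS D => p _ [Np Ep]; split => //; apply: contrapT.
by apply: mgrS D => p _ [Np Ep]; split.
Qed.

Lemma lbp_I x E E' : lbp x E -> lbp x E' -> lbp x (E `&` E').
Proof.
move=> H H' n mn; have [m1 [s1 [mm1 [D1|D1]]]] := H n mn.
  exists m1; split => //; split => //; left; apply: mgrS D1 => p _ [Np [Ep _]]; exact: (conj Np Ep).
have [m2 [s2 [mm2 [D2|D2]]]] := H' m1 mm1.
  exists m2; split; first by move=> p /s2 /s1.
  by split => //; left; apply: mgrS D2 => p _ [Np [_ Ep]]; exact: (conj Np Ep).
exists m2; split; first by move=> p /s2 /s1.
split => //; right; apply: mgrS (mgrU2 x _ _ D1 D2) => p _ [Np Hp].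
case: (pselect (E p)) => Ep; last by left; split => //; exact: s2.
by right; split => // E'p; apply: Hp.
Qed.

Lemma lbp_U x (E : nat -> set P) : (forall i, lbp x (E i)) -> lbp x (\bigcup_i E i).
Proof.
move=> H n mn.
case: (pselect (mgr x (N n `&` \bigcup_i E i))) => M.
  have [p [dp Nnp]] := mn.
  have [m [Rm [Nmp _]]] := Hbase setT p n (@openT P) Logic.I Nnp.
  exists m; split; first exact: HR.
  split; first by exists p.
  by left; apply: mgrS M => q _ [/(HR _ _ Rm) ? ?].
have [i Ni] : exists i, ~ mgr x (N n `&` E i).
  apply: contrapT => Hn; apply: M.
  have := @mgrU nat x (fun i => N n `&` E i) (fun i => contrapT (fun K => Hn (ex_intro _ i K))).
  by apply: mgrS => p _ [Np [i _ Ep]]; exists i.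
have [m [s [mm D]]] := L1 x (E i) n (H i) Ni.
exists m; split => //; split => //; right; apply: mgrS D => p _ [Np Hp]; split => //.
by move=> Ep; apply: Hp; exists i.
Qed.

Lemma SigmaE_lbp (Th : cwo) b (E : set P) : @SigmaE P Th b E -> forall x, lbp x E.
Proof.
elim=> {b E} [b U _ oU|b B B' v _ _ _ IH _ IH'] x; first exact: lbp_open.
apply: lbp_U => i; apply: lbp_I; [exact: IH| exact/lbp_C/IH'].
Qed.

Definition Dl (E : set P) : set X := [set x | ~ mgr x E].

Lemma Dl_open U : open U -> Dl U = d @` U.
Proof.
move=> oU; apply/seteqP; split => x.
  by move=> /nmgr_ex [p [dp Up]]; exists p.
move=> [p Up dp] M.
have [m [_ [Nmp sub]]] := Hbase U p n0 oU Up (Htop p).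
apply: (Hbaire x m); first by exists p.
by apply: mgrS M => q _ /sub.
Qed.

Lemma DlS E E' : E' `<=` E -> Dl E' `<=` Dl E.
Proof. by move=> sub x H M; apply: H; apply: mgrS M => p _ /sub. Qed.

Lemma Dl_union (B B' : nat -> set P) (O : set P) : open O ->
  (forall i x, lbp x (B i)) -> (forall i x, lbp x (B' i)) ->
  Dl ((\bigcup_i (B i `\` B' i)) `&` O) =
  \bigcup_(k in [set k : nat * Ix | N k.2 `<=` O])
     (Dl (B k.1 `&` N k.2) `\` Dl (B' k.1 `&` N k.2)).
Proof.
move=> oO HB HB'; apply/seteqP; split => x; last first.
  move=> [[i m] /= sub [H1 H2]] M; apply: H1.
  have M2 : mgr x (B' i `&` N m) by apply: contrapT.
  apply: mgrS (mgrU2 x _ _ M M2) => p _ [Bp Nmp].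
  case: (pselect (B' i p)) => B'p; first by right.
  by left; split; [exists i|exact: sub].
move=> H.
have [i Hi] : exists i, ~ mgr x ((B i `\` B' i) `&` O).
  apply: contrapT => Hn; apply: H.
  have := @mgrU nat x (fun i => (B i `\` B' i) `&` O)
    (fun i => contrapT (fun K => Hn (ex_intro _ i K))).
  by apply: mgrS => p _ [[i _ Cp] Op]; exists i.
have [n [sn Hn]] : exists n, N n `<=` O /\ ~ mgr x (N n `&` (B i `\` B' i)).
  apply: contrapT => Hn; apply: Hi.
  have := @mgrU Ix x (fun n => [set p | N n `<=` O /\ N n p /\ (B i `\` B' i) p]).
  case.
    move=> n; case: (pselect (N n `<=` O)) => sn.
      have : mgr x (N n `&` (B i `\` B' i)).
        by apply: contrapT => K; apply: Hn; exists n.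
      by apply: mgrS => p _ [_ []].
    by apply: mgr0 => p _ [].
  move=> Es [HEs HC]; exists Es; split => // p dp [Cp Op].
  have [m [_ [Nmp sub]]] := Hbase O p n0 oO Op (Htop p).
  by apply: HC => //; exists m.
have lC : lbp x (B i `\` B' i) by apply: lbp_I; [exact: HB|exact/lbp_C/HB'].
have [m [sm [mm M]]] := L1 x _ n lC Hn.
exists (i, m) => /=; first by move=> p /sm /sn.
split.
  move=> M1; apply: (Hbaire x m mm).
  apply: mgrS (mgrU2 x _ _ M1 M) => p _ Np.
  case: (pselect (B i p)) => Bp; first by left.
  by right; split => // [[]].
by move=> K; apply: K; apply: mgrS M => p _ [B'p Np]; split => // [[]].
Qed.

Lemma reindex (Z : topologicalType) (Th : cwo) (G G' : nat * Ix -> set Z)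
  (K : set (nat * Ix)) (v : nat -> Th) :
  (forall k, @SigmaE Z Th (v k.1) (G k)) -> (forall k, @SigmaE Z Th (v k.1) (G' k)) ->
  exists B2 B2' (v2 : nat -> Th), (forall j, SigmaE (v2 j) (B2 j)) /\
    (forall j, SigmaE (v2 j) (B2' j)) /\ (forall j, exists i, v2 j = v i) /\
    \bigcup_(k in K) (G k `\` G' k) = \bigcup_j (B2 j `\` B2' j).
Proof.
move=> HG HG'.
pose h j := odflt (0%N, n0) (unpickle j : option (nat * Ix)).
exists (fun j => G (h j)), (fun j => if `[< K (h j) >] then G' (h j) else G (h j)),
  (fun j => v (h j).1).
split; first by move=> j; exact: HG.
split; first by move=> j; case: ifP => _; [exact: HG'|exact: HG].
split; first by move=> j; exists (h j).1.
apply/seteqP; split => z.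
  move=> [k Kk [Gz G'z]]; exists (pickle k) => //.
  rewrite /h pickleK /=; split => //.
  by have -> : `[< K k >] = true by apply/asboolP.
move=> [j _ [Gz]]; case: ifP => [/asboolP Kk G'z|_ //].
by exists (h j).
Qed.

Hypothesis Hdopen : forall U, open U -> open (d @` U).

Lemma SigmaE_Dl (Th : cwo) b E : @SigmaE P Th b E ->
  forall O, open O -> @SigmaE X Th b (Dl (E `&` O)).
Proof.
elim=> {b E} [b U ob oU|b B B' v nb vb SB IH SB' IH'] O oO.
  by rewrite Dl_open; [apply: SE_open => //; exact/Hdopen/openI|exact: openI].
rewrite Dl_union //; last 2 first.
- by move=> i x; exact: SigmaE_lbp (SB i) x.
- by move=> i x; exact: SigmaE_lbp (SB' i) x.
have [B2 [B2' [v2 [H1 [H2 [H3 ->]]]]]] := @reindex X Th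
  (fun k => Dl (B k.1 `&` N k.2)) (fun k => Dl (B' k.1 `&` N k.2))
  [set k | N k.2 `<=` O] v (fun k => IH k.1 _ (HNo k.2)) (fun k => IH' k.1 _ (HNo k.2)).
apply: (@SE_union X Th b B2 B2' v2) => // j; have [i ->] := H3 j; exact: vb.
Qed.

Lemma Sigma_Dl (Th : cwo) E : Sigma Th E -> Sigma Th (Dl E).
Proof.
have -> : Dl E = Dl (E `&` setT) by rewrite setIT.
case=> [ [H1 oE] | [H2 [B [B2 [v [HB [HB2 ->]]]]]] ].
  by left; split => //; rewrite Dl_open ?setIT //; exact: Hdopen.
right; split => //.
rewrite Dl_union //; last 2 first.
- by move=> i x; exact: SigmaE_lbp (HB i) x.
- by move=> i x; exact: SigmaE_lbp (HB2 i) x.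
have [C [C2 [v2 [H1 [H3 [H4 ->]]]]]] := @reindex X Th
  (fun k => Dl (B k.1 `&` N k.2)) (fun k => Dl (B2 k.1 `&` N k.2))
  [set k | N k.2 `<=` setT] v (fun k => @SigmaE_Dl Th _ _ (HB k.1) _ (HNo k.2))
  (fun k => @SigmaE_Dl Th _ _ (HB2 k.1) _ (HNo k.2)).
by exists C, C2, v2.
exact: openT.
Qed.

Hypothesis Hsurj : forall x, exists p, d p = x.

Lemma cwo_min (A : cwo) (Q : A -> Prop) : (exists b, Q b) ->
  exists b, Q b /\ forall c, cwo_lt c b -> ~ Q c.
Proof.
move=> [b Qb]; apply: contrapT => H.
suff : forall b, ~ Q b by move/(_ b).
move=> {Qb}b; elim/(well_founded_ind (@cwo_wf A)): b => b IH Qb.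
by apply: H; exists b; split => // c /IH.
Qed.

Lemma Diff_Dl (A Th : cwo) S : Diff A (Sigma Th) (d @^-1` S) -> Diff A (Sigma Th) S.
Proof.
case=> F [HF [Hmon Heq]].
exists (fun b => Dl (F b)); split; first by move=> b; exact: Sigma_Dl.
split; first by move=> c b cb; apply: DlS; exact: Hmon.
have K : forall x b, ~ mgr x (F b) -> (forall c, cwo_lt c b -> mgr x (F c)) ->
    exists p, d p = x /\ (F b `\` \bigcup_(c in [set c | cwo_lt c b]) F c) p.
  move=> x b Hb Hc; apply: nmgr_ex => M; apply: Hb.
  have MU : mgr x (\bigcup_(c in [set c | cwo_lt c b]) F c).
    have := @mgrU A x (fun c => [set p | cwo_lt c b /\ F c p]).
    case.
      move=> c; case: (pselect (cwo_lt c b)) => cb.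
        by apply: mgrS (Hc c cb) => p _ [].
      by apply: mgr0 => p _ [].
    move=> Es [H1 H2]; exists Es; split => // p dp [c cb Fp].
    by apply: H2 => //; exists c.
  apply: mgrS (mgrU2 x _ _ M MU) => p _ Fp.
  case: (pselect ((\bigcup_(c in [set c | cwo_lt c b]) F c) p)) => H; first by right.
  by left; split.
have uniq : forall p b b', (F b `\` \bigcup_(c in [set c | cwo_lt c b]) F c) p ->
    (F b' `\` \bigcup_(c in [set c | cwo_lt c b']) F c) p -> b = b'.
  move=> p b b' [Fb Nb] [Fb' Nb'].
  case: (cwo_total b b') => [bb'|[//|b'b]].
    by exfalso; apply: Nb'; exists b.
  by exfalso; apply: Nb; exists b'.
apply/seteqP; split => x; last first.
  move=> [b Pb [Hb Hc]].
  have Hc' : forall c, cwo_lt c b -> mgr x (F c).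
    by move=> c cb; apply: contrapT => K'; apply: Hc; exists c.
  have [p [dp Lp]] := K x b Hb Hc'.
  have : (d @^-1` S) p by rewrite Heq; exists b.
  by rewrite /= dp.
move=> Sx; have [p0 dp0] := Hsurj x.
have NT : ~ mgr x setT.
  move=> M; apply: (Hbaire x n0); first by exists p0.
  by apply: mgrS M.
have [b0 [H0 Hmin]] : exists b0, ~ mgr x (F b0) /\ forall c, cwo_lt c b0 -> ~ ~ mgr x (F c).
  apply: cwo_min; apply: contrapT => Hn; apply: NT.
  have := @mgrU A x F (fun b => contrapT (fun K => Hn (ex_intro _ b K))).
  apply: mgrS => p dp _.
  have : (d @^-1` S) p by rewrite /= dp.
  by rewrite Heq => -[b _ [Fp _]]; exists b.
have [p [dp Lp]] := K x b0 H0 (fun c cb => contrapT (Hmin c cb)).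
have : (d @^-1` S) p by rewrite /= dp.
rewrite Heq => -[b Pb Lb].
have eb := uniq p b0 b Lp Lb; subst b.
exists b0 => //; split => // -[c cb Hc]; exact: Hmin c cb Hc.
Qed.
End Vaught.
Definition cyl (p : baire) (n : nat) : set baire :=
  [set q | forall i, (i < n)%N -> q i = p i].

Lemma cyl_nbhs (p : baire) n : nbhs p (cyl p n).
Proof.
elim: n => [|n IH].
  have -> : cyl p 0 = setT by apply/seteqP; split => q // _ i.
  exact: filterT.
have H : nbhs p [set q : baire | q n = p n].
  have := @proj_continuous nat (fun _ => nat) n p.
  move=> /(_ [set k | k = p n]) /=.
  apply.
  by apply/principal_filterP.
apply: filterS (filterI IH H) => q [Hq1 Hq2] i; rewrite ltnS leq_eqVlt.
by case/orP => [/eqP ->//|]; exact: Hq1.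
Qed.

Lemma baire_nbhsP (p : baire) (U : set baire) :
  nbhs p U <-> exists n, cyl p n `<=` U.
Proof.
split; last first.
  by case=> n H; apply: filterS H (cyl_nbhs p n).
pose F := [set V : set baire | exists n, cyl p n `<=` V].
have FF : Filter F.
  split.
  - by exists 0 => q _.
  - move=> A B [n HA] [m HB]; exists (maxn n m) => q Hq; split.
      by apply: HA => i Hi; apply: Hq; rewrite leq_max Hi.
    by apply: HB => i Hi; apply: Hq; rewrite leq_max Hi orbT.
  - by move=> A B AB [n HA]; exists n => q /HA /AB.
have : {ptws, F --> (p : nat -> nat)}.
  apply/pointwise_cvgP => t V /=.
  move=> /principal_filterP Vp.
  by exists t.+1 => q Hq /=; rewrite Hq.
by move=> /(_ U); apply.
Qed.

Lemma basis_enum (X : topologicalType) : @second_countable X ->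
  exists b : nat -> set X, (forall n, open (b n)) /\
    (forall x W, nbhs x W -> exists n, b n x /\ b n `<=` W).
Proof.
case=> B /countable_injP [f finj] [Bo Bb].
pose b n := match pselect (exists U, B U /\ f U = n) with
  | left H => projT1 (cid H) | right _ => set0 end.
have bB : forall U, B U -> b (f U) = U.
  move=> U BU; rewrite /b; case: pselect => [H|H]; last by exfalso; apply: H; exists U.
  case: (cid H) => V [BV fV] /=; apply: finj; rewrite ?inE //.
exists b; split.
  move=> n; rewrite /b; case: pselect => [H|_]; last exact: open0.
  by case: (cid H) => V [BV _] /=; exact: Bo.
move=> x W /(Bb x) [U [BU Ux] sUW].
by exists (f U); rewrite bB.
Qed.

Lemma T0_uniq (X : topologicalType) (b : nat -> set X) :
  kolmogorov_space X -> (forall x W, nbhs x W -> exists n, b n x /\ b n `<=` W) ->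
  forall x y, (forall n, b n x <-> b n y) -> x = y.
Proof.
move=> K bb x y H; apply: contrapT => nxy.
have /K [A [[Ax yA]|[Ay xA]]] : x != y by apply/eqP.
  have [n [bnx sub]] := bb x A (set_mem Ax).
  by apply: (set_mem yA); apply: sub; apply/H.
have [n [bny sub]] := bb y A (set_mem Ay).
by apply: (set_mem xA); apply: sub; apply/H.
Qed.

Section Concrete.
Variable X : topologicalType.
Variable b : nat -> set X.
Hypothesis bo : forall n, open (b n).
Hypothesis bbase : forall x W, nbhs x W -> exists n, b n x /\ b n `<=` W.
Hypothesis buniq : forall x y, (forall n, b n x <-> b n y) -> x = y.
Variable x0 : X.

Definition code_ok (p : baire) x := forall n, b n x <-> exists i, p i = n.+1.
Definition Dd : set baire := [set p | exists x, code_ok p x].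
Definition dd (p : baire) : X :=
  match pselect (exists x, code_ok p x) with
  | left H => projT1 (cid H) | right _ => x0 end.

Lemma dd_spec p x : code_ok p x -> dd p = x.
Proof.
move=> H; rewrite /dd; case: pselect => [H'|H']; last by exfalso; apply: H'; exists x.
case: (cid H') => y Hy /=; apply: buniq => n; split.
  by move/Hy/H.
by move/H/Hy.
Qed.

Definition enum x : baire := fun i => if `[< b i x >] then i.+1 else 0.

Lemma enum_ok x : code_ok (enum x) x.
Proof.
move=> n; split.
  by move=> bn; exists n; rewrite /enum; case: asboolP.
by move=> [i]; rewrite /enum; case: asboolP => // bi [<-].
Qed.

Definition P : topologicalType := set_type Dd.
Definition dP (p : P) : X := dd (proj1_sig p).

Definition Nc (s : seq nat) : set P :=
  [set p | forall i, (i < size s)%N -> proj1_sig p i = nth 0 s i].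
Definition Rc (m n : seq nat) :=
  (size n <= size m)%N /\ forall i, (i < size n)%N -> nth 0 m i = nth 0 n i.

Definition okv x c := c = 0 \/ exists n, c = n.+1 /\ b n x.

Lemma mkP (q : baire) : Dd q -> P.
Proof. by move=> H; exact: (@exist _ _ q (mem_set H)). Defined.

Lemma good_ok x t : (exists p : P, dP p = x /\ Nc t p) <->
  (forall i, (i < size t)%N -> okv x (nth 0 t i)).
Proof.
split.
  move=> [[q qD] [dq Nq]] i it; have [y Hy] := set_mem qD.
  rewrite /dP /= (@dd_spec q y Hy) in dq; subst y; move: Nq => /= Nq.
  rewrite -(Nq i it); case E: (q i) => [|n]; first by left.
  by right; exists n; split => //; apply/Hy; exists i.
move=> H.
pose q : baire := fun i => if (i < size t)%N then nth 0 t i else enum x (i - size t).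
have qok : code_ok q x.
  move=> n; split.
    move=> bn; exists (size t + n)%N; rewrite /q ifF; last by rewrite -{2}(addn0 (size t)) ltn_add2l.
    by rewrite addKn /enum; case: asboolP.
  move=> [i]; rewrite /q; case: ifP => it.
    by case: (H i it) => [->//|[m [-> bm]] [<-]].
  by rewrite /enum; case: asboolP => // bi [<-].
exists (@mkP q (ex_intro _ x qok)); split; first exact: dd_spec.
by move=> i it /=; rewrite /q it.
Qed.

Definition pv (p : P) : baire := proj1_sig p.

Definition Cy (s : seq nat) : set baire :=
  [set q | forall i, (i < size s)%N -> q i = nth 0 s i].

Lemma Cy_open s : open (Cy s).
Proof.
rewrite openE => q Hq; rewrite /interior; apply/baire_nbhsP.
exists (size s) => r Hr i it; rewrite Hr //; exact: Hq.
Qed.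

Lemma openP_P (U : set P) : open U <-> exists V : set baire, open V /\ U = pv @^-1` V.
Proof.
split.
  by case=> V oV <-; exists V.
by case=> V [oV ->]; exists V.
Qed.

Lemma Nc_open s : open (Nc s).
Proof. by apply/openP_P; exists (Cy s); split; [exact: Cy_open|]. Qed.

Lemma HRc m n : Rc m n -> Nc m `<=` Nc n.
Proof. by move=> [sz H] p Hp i it; rewrite Hp ?H //; exact: leq_trans it sz. Qed.

Lemma Hbase_c (U : set P) p n : open U -> U p -> Nc n p ->
  exists m, Rc m n /\ Nc m p /\ Nc m `<=` U.
Proof.
move=> /openP_P [V [oV eU]] Up Np.
have := Up; rewrite eU /= => Vp.
have : nbhs (proj1_sig p) V by apply: open_nbhs_nbhs.
move=> /baire_nbhsP [k sub].
pose m := mkseq (proj1_sig p) (maxn k (size n)).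
have szm : size m = maxn k (size n) by rewrite size_mkseq.
exists m; split; [split|split].
- by rewrite szm leq_maxr.
- move=> i it; rewrite nth_mkseq ?Np //.
  by apply: leq_trans it _; rewrite leq_maxr.
- by move=> i; rewrite szm => it; rewrite nth_mkseq.
move=> q Nq; apply: sub => i ik.
have ik' : (i < size m)%N by rewrite szm; apply: leq_trans ik _; rewrite leq_maxl.
have E := Nq i ik'; rewrite nth_mkseq in E; first exact: E.
by rewrite -szm.
Qed.

Lemma qcode (q : P) : code_ok (pv q) (dP q).
Proof.
case: q => r rD; have [y Hy] := set_mem rD.
by rewrite /dP /pv /= (@dd_spec r y Hy).
Qed.

Lemma dP_cont : continuous dP.
Proof.
move=> p W /= HW.
have [n [bn sub]] := bbase _ _ HW.
have [i pi] := (qcode p n).1 bn.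
pose s := mkseq (pv p) i.+1.
apply: (@filterS _ _ _ (Nc s)).
  move=> q Nq; apply: sub; apply/(qcode q n); exists i.
  have := Nq i; rewrite size_mkseq ltnSn nth_mkseq // => /(_ isT) E.
  by rewrite /pv E -pi.
apply: open_nbhs_nbhs; split; first exact: Nc_open.
by move=> j; rewrite size_mkseq => jl; rewrite nth_mkseq.
Qed.

Lemma dd_within : {within Dd, continuous dd}.
Proof. by apply/subspace_sigL_continuousP; exact: dP_cont. Qed.

Definition Wl (s : seq nat) : set X :=
  [set y | forall i, (i < size s)%N -> okv y (nth 0 s i)].

Lemma Wl_open s : open (Wl s).
Proof.
elim: s => [|c s IH].
  have -> : Wl [::] = setT by apply/seteqP; split => // y _ i.
  exact: openT.
have -> : Wl (c :: s) = [set y | okv y c] `&` Wl s.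
  apply/seteqP; split => y.
    by move=> H; split; [exact: (H 0%N)|move=> i it; exact: (H i.+1)].
  by move=> [H1 H2] [|i] //= it; exact: H2.
apply: openI => //; case: c => [|c].
  have -> : [set y | okv y 0] = setT by apply/seteqP; split => // y _; left.
  exact: openT.
have -> : [set y | okv y c.+1] = b c; last exact: bo.
apply/seteqP; split => y; first by case => // -[n [[<-]]].
by move=> bc; right; exists c.
Qed.

Lemma dP_open (U : set P) : open U -> open (dP @` U).
Proof.
move=> oU; rewrite openE => x [p Up <-]; rewrite /interior.
have [m [_ [Nmp sub]]] := Hbase_c U p [::] oU Up (fun i (H : (i < 0)%N) => False_ind _ (notF H)).
apply: (@filterS _ _ _ (Wl m)).
  move=> y /(good_ok y m).2 [q [dq Nq]]; exists q => //; exact: sub.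
apply: open_nbhs_nbhs; split; first exact: Wl_open.
by apply/(good_ok (dP p) m).1; exists p.
Qed.

Lemma dP_surj x : exists p : P, dP p = x.
Proof.
exists (@mkP (enum x) (ex_intro _ x (enum_ok x))).
exact: dd_spec (enum_ok x).
Qed.

Lemma Rc_trans a b' c : Rc a b' -> Rc b' c -> Rc a c.
Proof.
move=> [s1 H1] [s2 H2]; split; first exact: leq_trans s2 s1.
by move=> i ic; rewrite H1 ?H2 //; exact: leq_trans ic s2.
Qed.

Lemma Rc_rcons m c : Rc (rcons m c) m.
Proof.
split; first by rewrite size_rcons.
by move=> i im; rewrite nth_rcons im.
Qed.

Fixpoint tsq (f : nat * seq nat -> seq nat) (c : nat -> nat) (n : seq nat) k :=
  match k with 0 => n | k'.+1 => rcons (f (k', tsq f c n k')) (c k') end.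

Definition nwdc x (E : set P) := forall n, (exists p, dP p = x /\ Nc n p) ->
  exists m, Rc m n /\ (exists p, dP p = x /\ Nc m p) /\
    (forall p, dP p = x -> Nc m p -> E p -> False).

Lemma baire_c x n : (exists p, dP p = x /\ Nc n p) ->
  ~ (exists Es : nat -> set P, (forall k, nwdc x (Es k)) /\
       (forall p, dP p = x -> Nc n p -> exists k, Es k p)).
Proof.
move=> mn [Es [HEs Hc]].
pose good t := forall i, (i < size t)%N -> okv x (nth 0 t i).
have : forall kt : nat * seq nat, exists m, good kt.2 ->
    Rc m kt.2 /\ good m /\ (forall p, dP p = x -> Nc m p -> Es kt.1 p -> False).
  move=> [k t]; case: (pselect (good t)) => gt; last by exists t.
  have [m [Rm [mm Hm]]] := HEs k t ((good_ok x t).2 gt).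
  by exists m => _; split => //; split => //; exact/(good_ok x m).1.
move=> /choice [f Hf].
pose c k := if `[< b k x >] then k.+1 else 0%N.
have okc : forall k, okv x (c k).
  by move=> k; rewrite /c; case: asboolP => H; [right; exists k|left].
pose ts := tsq f c n.
have G : forall k, good (ts k).
  elim=> [|k IH]; first exact/(good_ok x n).1.
  have [_ [gm _]] := Hf (k, ts k) IH.
  move=> i; rewrite /= size_rcons ltnS leq_eqVlt => /orP [/eqP ->|il].
    by rewrite nth_rcons ltnn eqxx.
  by rewrite nth_rcons il; exact: gm.
have Rs : forall k, Rc (ts k.+1) (ts k).
  by move=> k; have [Rm _] := Hf (k, ts k) (G k); exact: Rc_trans (Rc_rcons _ _) Rm.
have Rk : forall k k', (k <= k')%N -> Rc (ts k') (ts k).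
  move=> k k' /subnK <-; elim: (k' - k)%N => [|j IH].
    by split => //.
  by rewrite addSn; exact: Rc_trans (Rs _) IH.
have sz : forall k, (k <= size (ts k))%N.
  elim=> [//|k IH] /=; rewrite size_rcons ltnS.
  have [[s1 _] _] := Hf (k, ts k) (G k); exact: leq_trans IH s1.
pose q : baire := fun i => nth 0 (ts i.+1) i.
have Q : forall k i, (i < size (ts k))%N -> q i = nth 0 (ts k) i.
  move=> k i ik; rewrite /q; case: (leqP k i.+1) => ki.
    by have [_ H] := Rk _ _ ki; rewrite H.
  have [_ H] := Rk _ _ (ltnW ki); rewrite H //; exact: sz.
have qok : code_ok q x.
  move=> j; split.
    move=> bj; exists (size (ts j.+1)).-1.
    have szp : (0 < size (ts j.+1))%N by rewrite /= size_rcons.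
    rewrite (Q j.+1) ?prednK //= nth_rcons size_rcons ltnn eqxx /c.
    by case: asboolP.
  move=> [i qi]; have := G i.+1 i (sz i.+1).
  rewrite -/(q i) qi; case => // -[m [[<-]]] //.
pose qP := @mkP q (ex_intro _ x qok).
have dq : dP qP = x by exact: (@dd_spec q x qok).
have [k Ek] := Hc qP dq (fun i ik => Q 0%N i ik).
have [_ [_ H]] := Hf (k, ts k) (G k).
apply: (H qP dq) => // i ik; rewrite /qP /= (Q k.+1) /=.
  by rewrite nth_rcons ik.
by rewrite size_rcons ltnS ltnW.
Qed.
End Concrete.

Theorem theorem68 (X : topologicalType) (D : set baire) (rho : baire -> X) :
  @second_countable X -> kolmogorov_space X -> admissible D rho ->
  forall (A Th : cwo), inhabited A -> inhabited Th ->
  forall S : set X,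
    Diff A (Sigma Th) S <->
    Diff A (Sigma Th) [set p : set_type D | S (rho (val p))].
Proof.
move=> sc T0 [rc adm] A Th _ _ S.
have crho : continuous (sigL D rho) by apply/subspace_sigL_continuousP.
split.
  by move=> H; exact: (@Diff_pre _ _ _ crho Th A S H).
move=> H.
have [b [bo bb]] := basis_enum X sc.
have bu := T0_uniq X b T0 bb.
pose x0 := rho (fun _ => 0%N).
have [Dg [g [cg [eD eg]]]] := adm (Dd X b) (dd X b x0) (dd_within X b bb bu x0).
have sDg : Dd X b `<=` Dg by rewrite eD => p [].
have cg' : continuous (sigL (Dd X b) g).
  by apply/subspace_sigL_continuousP; exact: continuous_subspaceW sDg cg.
have hD : forall p : P X b, D (g (pv X b p)).
  have eDp : forall q, Dd X b q -> D (g q).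
    move=> q Hq; have : [set p | Dg p /\ D (g p)] q by rewrite -eD.
    by case.
  by move=> p; apply: eDp; exact: set_mem (proj2_sig p).
pose h : P X b -> set_type D := fun p => @exist _ _ (g (pv X b p)) (mem_set (hD p)).
have ch : continuous h.
  by apply: (@continuous_comp_initial _ _ _ set_val); exact: cg'.
have HP := @Diff_pre _ _ h ch Th A _ H.
have E : h @^-1` [set p | S (rho (val p))] = dP X b x0 @^-1` S.
  apply/seteqP; split => p /=; rewrite /dP eg //; exact: set_mem (proj2_sig p).
rewrite E in HP.
apply: (@Diff_Dl (P X b) X (dP X b x0) _ (Nc X b) Rc (Nc_open X b) (HRc X b)
  (Hbase_c X b) [::]) => //.
- move=> x n mn M; exact: (baire_c X b bu x0 x n mn M).
- exact: dP_open X b bo bu x0.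
- exact: dP_surj X b bu x0.
Qed.
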